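(* Let $G$ be a trigraph and $\varphi\in\operatorname{Aut}(G)$. Then there exists a partial contraction sequence of $G$ of width at most $4\Delta(G)$ whose last partition is the partition of $V(G)$ into the orbits of $\langle\varphi\rangle$, i.e., which contracts $G$ to $G/\langle\varphi\rangle$. In particular, $\operatorname{tww}(G)\leq\max\{4\Delta(G),\operatorname{tww}(G/\langle\varphi\rangle)\}$.
   Context: A trigraph is a finite simple graph whose edges are each colored red or black. $\operatorname{Aut}(G)$ is the automorphism group of the underlying simple graph of $G$ (automorphisms need not preserve edge colors); $\Delta(G)$ is the maximum degree (both colors). The red degree of a vertex is the number of red edges incident to it. For a partition $\mathcal{P}$ of $V(G)$, the quotient trigraph $G/\mathcal{P}$ has vertex set $\mathcal{P}$; two distinct parts $U,W$ are joined by a black edge if every pair $\{u,w\}$ with $u\in U,w\in W$ is a black edge of $G$, are non-adjacent if no such pair is an edge, and are joined by a red edge otherwise. For a group $\Gamma\subseteq\operatorname{Aut}(G)$, $G/\Gamma$ is the quotient by the partition into $\Gamma$-orbits. A contraction sequence of an $n$-vertex trigraph $G$ is a sequence $\mathcal{P}_n,\dots,\mathcal{P}_1$ of partitions of $V(G)$ where $\mathcal{P}_n$ is the partition into singletons and each $\mathcal{P}_i$ arises from $\mathcal{P}_{i+1}$ by merging two parts; a partial contraction sequence is a prefix $\mathcal{P}_n,\dots,\mathcal{P}_i$. The width is the maximum red degree over the trigraphs $G/\mathcal{P}_j$ in the sequence, and $\operatorname{tww}(G)$ is the minimum width of a (complete) contraction sequence. *)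

(* Defs.v *)
From mathcomp Require Import all_boot all_fingroup.
From mathcomp Require Import boolp.
From mathcomp Require Import zify.
Set Implicit Arguments. Unset Strict Implicit. Unset Printing Implicit Defensive.

(* A trigraph on a finite vertex type T: a simple graph (symmetric irreflexive
   edge relation) whose edges are colored red or black; [tred] is the set of
   red edges (a symmetric subrelation of the edges); the other edges are black. *)
Record trigraph (T : finType) := Trigraph {
  tedge : rel T;
  tred : rel T;
  tedge_sym : symmetric tedge;
  tedge_irr : irreflexive tedge;
  tred_sym : symmetric tred;
  tred_sub : subrel tred tedge }.

Section Trigraphs.
Variable T : finType.
Implicit Types (G : trigraph T) (U W : {set T}) (P Q : {set {set T}}).

Definition tblack G x y := tedge G x y && ~~ tred G x y.

(* automorphism of the underlying simple graph (colors need not be preserved) *)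
Definition is_aut G (phi : {perm T}) := forall x y, tedge G (phi x) (phi y) = tedge G x y.

Definition degree G x := #|[set y | tedge G x y]|.
Definition red_degree G x := #|[set y | tred G x y]|.
Definition Delta G := \max_(x : T) degree G x.
Definition max_red_degree G := \max_(x : T) red_degree G x.

Definition all_black G U W := [forall u in U, forall w in W, tblack G u w].
Definition non_adj G U W := [forall u in U, forall w in W, ~~ tedge G u w].

Lemma non_adj_sym G U W : non_adj G U W = non_adj G W U.
Proof.
apply/forall_inP/forall_inP => H x xP; apply/forall_inP => y yP;
  by rewrite tedge_sym; move/forall_inP: (H y yP); apply.
Qed.

Lemma all_black_sym G U W : all_black G U W = all_black G W U.
Proof.
apply/forall_inP/forall_inP => H x xP; apply/forall_inP => y yP;
  by rewrite /tblack tedge_sym tred_sym; move/forall_inP: (H y yP); apply.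
Qed.

End Trigraphs.

Section Quotients.
Variable T : finType.
Implicit Types (G : trigraph T) (U W : {set T}) (P Q : {set {set T}}).

Definition part P := {U : {set T} | U \in P}.

Definition qedge G P : rel (part P) := fun X Y =>
  (val X != val Y) && ~~ non_adj G (val X) (val Y).
Definition qred G P : rel (part P) := fun X Y =>
  [&& val X != val Y, ~~ all_black G (val X) (val Y) & ~~ non_adj G (val X) (val Y)].

Arguments qedge G P : clear implicits.
Arguments qred G P : clear implicits.

Lemma qedge_sym G P : symmetric (qedge G P).
Proof. by move=> X Y; rewrite /qedge eq_sym non_adj_sym. Qed.
Lemma qedge_irr G P : irreflexive (qedge G P).
Proof. by move=> X; rewrite /qedge eqxx. Qed.
Lemma qred_sym G P : symmetric (qred G P).
Proof. by move=> X Y; rewrite /qred eq_sym non_adj_sym all_black_sym. Qed.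
Lemma qred_sub G P : subrel (qred G P) (qedge G P).
Proof. by move=> X Y /and3P[h1 _ h3]; rewrite /qedge h1 h3. Qed.

Definition quot G P : trigraph (part P) :=
  Trigraph (@qedge_sym G P) (@qedge_irr G P) (@qred_sym G P) (@qred_sub G P).

Definition singletons : {set {set T}} := [set [set x] | x : T].

Definition merge_step : rel {set {set T}} := fun P Q =>
  [exists U in P, exists W in P, (U != W) && (Q == (U :|: W) |: ((P :\ U) :\ W))].

(* A (partial) contraction sequence P_n, ..., P_i is represented by the list
   s = [:: P_{n-1}; ...; P_i]; the full sequence is singletons :: s. *)
Definition partial_ctr_seq (s : seq {set {set T}}) := path merge_step singletons s.
Definition last_part (s : seq {set {set T}}) := last singletons s.
(* complete: the last partition has (at most, when V(G) is empty) one part *)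
Definition complete_ctr_seq (s : seq {set {set T}}) :=
  partial_ctr_seq s /\ #|last_part s| <= 1.

Definition width G (s : seq {set {set T}}) :=
  \max_(P <- singletons :: s) max_red_degree (quot G P).

Definition tww_at_most G k := exists s, complete_ctr_seq s /\ width G s <= k.

Lemma merge_chain_exists n P : #|P| <= n ->
  exists s, path merge_step P s /\ #|last P s| <= 1.
Proof.
elim: n P => [|n IH] P hP.
  by exists [::]; split => //; apply: leq_trans hP _.
case: (leqP #|P| 1) => h1; first by exists [::].
case/card_gt1P: h1 => U [W [UP WP UW]].
set Q := (U :|: W) |: ((P :\ U) :\ W).
have hQ : #|Q| <= n.
  have e1 := cardsD1 U P; have e2 := cardsD1 W (P :\ U).
  have WU : (W \in P :\ U) by rewrite !inE eq_sym UW WP.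
  rewrite UP in e1; rewrite WU in e2.
  rewrite e1 e2 add1n !ltnS in hP.
  by rewrite cardsU1; case: (_ \notin _) => //; apply: ltnW.
have [s [ps ls]] := IH Q hQ.
exists (Q :: s); split => //=; rewrite ps andbT.
by apply/existsP; exists U; rewrite UP; apply/existsP; exists W; rewrite WP UW eqxx.
Qed.

Lemma tww_exists G : exists k, `[< tww_at_most G k >].
Proof.
have [s [ps ls]] := @merge_chain_exists #|singletons| singletons (leqnn _).
by exists (width G s); apply/asboolP; exists s.
Qed.

Definition tww G : nat := ex_minn (tww_exists G).

End Quotients.

(* Main.v *)
Require Import Defs.
From mathcomp Require Import all_boot all_fingroup.
From mathcomp Require Import zify.
From mathcomp Require Import boolp.
Set Implicit Arguments. Unset Strict Implicit. Unset Printing Implicit Defensive.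

Section Generic.
Variable T : finType.
Implicit Types (S R : {set {set T}}) (X Y Z : {set T}).

Definition PP S := [/\ set0 \notin S,
  forall x, exists2 X, X \in S & x \in X &
  forall X Y x, X \in S -> Y \in S -> x \in X -> x \in Y -> X = Y].

Definition mergeS S X Y := (X :|: Y) |: ((S :\ X) :\ Y).

Lemma in_mergeS S X Y Z :
  (Z \in mergeS S X Y) = (Z == X :|: Y) || [&& Z != Y, Z != X & Z \in S].
Proof. by rewrite !inE. Qed.

Lemma PP_merge S X Y : PP S -> X \in S -> Y \in S -> PP (mergeS S X Y).
Proof.
case=> S0 Scov Suniq XS YS; split.
- rewrite in_mergeS negb_or; apply/andP; split.
    rewrite eq_sym setU_eq0; apply/nandP; left.
    by apply/eqP => X0; rewrite -X0 XS in S0.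
  by rewrite (negbTE S0) !andbF.
- move=> x; have [Z ZS xZ] := Scov x.
  case: (boolP ((Z == X) || (Z == Y))) => [/orP[]/eqP EZ|].
  + by exists (X :|: Y); rewrite ?in_mergeS ?eqxx // inE -EZ xZ.
  + by exists (X :|: Y); rewrite ?in_mergeS ?eqxx // inE -EZ xZ ?orbT.
  + rewrite negb_or => /andP[nZX nZY].
    by exists Z; rewrite // in_mergeS nZX nZY ZS orbT.
- move=> Z1 Z2 x; rewrite !in_mergeS.
  have key : forall Z, Z != Y -> Z != X -> Z \in S -> x \in X :|: Y -> x \in Z -> False.
    move=> Z nZY nZX ZS; rewrite inE => /orP[] xW xZ.
      by rewrite (Suniq Z X x ZS XS xZ xW) eqxx in nZX.
    by rewrite (Suniq Z Y x ZS YS xZ xW) eqxx in nZY.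
  case/orP=> [/eqP->|/and3P[n1 n2 h1]]; case/orP=> [/eqP->|/and3P[n3 n4 h2]] //.
  + by move=> x1 x2; case: (key _ n3 n4 h2 x1 x2).
  + by move=> x1 x2; case: (key _ n1 n2 h1 x2 x1).
  + exact: Suniq.
Qed.

Lemma merge_stepE S X Y : X \in S -> Y \in S -> X != Y -> merge_step S (mergeS S X Y).
Proof.
move=> XS YS nXY; apply/existsP; exists X; rewrite XS /=.
by apply/existsP; exists Y; rewrite YS nXY eqxx.
Qed.

Lemma merge_stepP S R : merge_step S R ->
  exists X Y, [/\ X \in S, Y \in S, X != Y & R = mergeS S X Y].
Proof.
case/existsP=> X /andP[XS] /existsP[Y] /and3P[YS nXY /eqP ->].
by exists X, Y.
Qed.

Lemma card_mergeS S X Y : X \in S -> Y \in S -> X != Y -> #|mergeS S X Y| < #|S|.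
Proof.
move=> XS YS nXY; rewrite /mergeS.
have e1 := cardsD1 X S; have e2 := cardsD1 Y (S :\ X).
have YX : Y \in S :\ X by rewrite !inE eq_sym nXY YS.
rewrite XS in e1; rewrite YX in e2.
rewrite e1 e2 cardsU1 /=; clear e1 e2; case: (_ \notin _) => /=; rewrite ?add1n ?add0n ltnS // leqW.
Qed.

Lemma PP_singletons : PP (@singletons T).
Proof.
split.
- apply/imsetP => -[x _ /setP /(_ x)]; rewrite !inE eqxx //.
- by move=> x; exists [set x]; rewrite ?set11 ?imset_f.
- move=> X Y x /imsetP[y _ ->] /imsetP[z _ ->].
  by rewrite !inE => /eqP-> /eqP->.
Qed.

Lemma path_PP S s : PP S -> path (@merge_step T) S s -> forall R, R \in s -> PP R.
Proof.
elim: s S => [//|R s IH] S PS /= /andP[/merge_stepP[X [Y [XS YS _ ->]]] ps] R'.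
rewrite inE => /orP[/eqP->|]; first exact: PP_merge.
by move=> Rs; apply: (IH _ (PP_merge PS XS YS) ps _ Rs).
Qed.

Definition fib (g : T -> T) : {set {set T}} := [set [set y | g y == g x] | x : T].
Definition sat (f : T -> T) S := forall X x y, X \in S -> x \in X -> f x = f y -> y \in X.
Definition cst (g : T -> T) S := forall X x y, X \in S -> x \in X -> y \in X -> g x = g y.

Lemma PP_fib g : PP (fib g).
Proof.
split.
- apply/imsetP => -[x _ /setP /(_ x)]; rewrite !inE eqxx //.
- by move=> x; exists [set y | g y == g x]; rewrite ?inE ?imset_f.
- move=> X Y x /imsetP[y _ ->] /imsetP[z _ ->].
  rewrite !inE => /eqP e1 /eqP e2; apply/setP => w; rewrite !inE.
  by rewrite -e1 e2.
Qed.

Lemma sat_fib f g : (forall x y, f x = f y -> g x = g y) -> sat f (fib g).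
Proof.
move=> fg X x y /imsetP[z _ ->]; rewrite !inE => /eqP e1 e2.
by rewrite -e1 (fg _ _ (esym e2)).
Qed.

Lemma cst_fibS f g : (forall x y, f x = f y -> g x = g y) -> cst g (fib f).
Proof.
move=> fg X x y /imsetP[z _ ->]; rewrite !inE => /eqP e1 /eqP e2.
by apply: fg; rewrite e1 e2.
Qed.

Lemma cst_fib g : cst g (fib g).
Proof. by move=> X x y /imsetP[z _ ->]; rewrite !inE => /eqP-> /eqP->. Qed.

Definition canmerge (g : T -> T) S :=
  [exists X in S, exists Y in S, (X != Y) && [exists x in X, exists y in Y, g x == g y]].

Lemma nomerge_class g S W x : PP S -> cst g S -> ~~ canmerge g S ->
  W \in S -> x \in W -> W = [set y | g y == g x].
Proof.
case=> S0 Scov Suniq cg nE WS xW; apply/setP => y; rewrite inE.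
apply/idP/idP => [yW|/eqP gyx]; first by rewrite (cg W y x).
have [V VS yV] := Scov y.
case: (eqVneq V W) => [<-//|nVW].
case/negP: nE; apply/existsP; exists V; rewrite VS /=; apply/existsP; exists W.
rewrite WS nVW /=; apply/existsP; exists y; rewrite yV /=.
by apply/existsP; exists x; rewrite xW gyx eqxx.
Qed.

Lemma nomerge_fib g S : PP S -> cst g S -> ~~ canmerge g S -> S = fib g.
Proof.
move=> PS cg nE; have PS' := PS; case: PS' => S0 Scov Suniq.
apply/setP => Z; apply/idP/idP => [ZS|/imsetP[x _ ->]].
  have : Z != set0 by apply: contraNneq S0 => <-.
  case/set0Pn => x xZ; rewrite (nomerge_class PS cg nE ZS xZ).
  exact: imset_f.
have [W WS xW] := Scov x.
by rewrite -(nomerge_class PS cg nE WS xW).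
Qed.

Lemma merge_good f g S X Y x y : PP S -> sat f S -> cst g S ->
  X \in S -> Y \in S -> x \in X -> y \in Y -> g x = g y ->
  [/\ PP (mergeS S X Y), sat f (mergeS S X Y) & cst g (mergeS S X Y)].
Proof.
move=> PS sf cg XS YS xX yY gxy; split; first exact: PP_merge.
- move=> Z u v; rewrite in_mergeS => /orP[/eqP->|/and3P[_ _ ZS]]; last exact: sf.
  rewrite !inE => /orP[uX|uY] fuv; first by rewrite (sf X u v).
  by rewrite (sf Y u v) ?orbT.
- move=> Z u v; rewrite in_mergeS => /orP[/eqP->|/and3P[_ _ ZS]]; last exact: cg.
  have gX w : w \in X -> g w = g x by move=> wX; exact: (cg X).
  have gY w : w \in Y -> g w = g x by move=> wY; rewrite gxy; exact: (cg Y).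
  by rewrite !inE => /orP[/gX->|/gY->] /orP[/gX->|/gY->].
Qed.

Lemma merge_to_fib f g :
  forall S, PP S -> sat f S -> cst g S ->
  exists s, [/\ path (@merge_step T) S s, last S s = fib g &
    forall R, R \in s -> [/\ PP R, sat f R & cst g R]].
Proof.
move=> S; move: {2}#|S| (leqnn #|S|) => n; elim: n S => [|n IH] S cS PS sf cg.
  case: (boolP (canmerge g S)) => [|nE].
    case/existsP=> X /andP[XS _]; have : 0 < #|S| by apply/card_gt0P; exists X.
    by rewrite leqNgt in cS; rewrite (negbTE cS).
  by exists [::]; split => //; rewrite /= (nomerge_fib PS cg nE).
case: (boolP (canmerge g S)) => [|nE]; last first.
  by exists [::]; split => //; rewrite /= (nomerge_fib PS cg nE).
case/existsP=> X /andP[XS] /existsP[Y] /and3P[YS nXY] /existsP[x] /andP[xX].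
case/existsP=> y /andP[yY /eqP gxy].
have [P' s' c'] := merge_good PS sf cg XS YS xX yY gxy.
have cS' : #|mergeS S X Y| <= n.
  by rewrite -ltnS; apply: leq_trans (card_mergeS XS YS nXY) cS.
have [s [ps ls Rs]] := IH _ cS' P' s' c'.
exists (mergeS S X Y :: s); split => //=.
  by rewrite ps andbT merge_stepE.
move=> R; rewrite inE => /orP[/eqP->|]; [by [] | exact: Rs].
Qed.
End Generic.

Section Orbits.
Variables (T : finType) (phi : {perm T}).

Definition Lo x := #|porbit phi x|.
Definition bse x := odflt x [pick y in porbit phi x].
Definition pos x := index x (traject phi (bse x) (Lo x)).
Definition start j x := iter (pos x %/ 2 ^ j * 2 ^ j) phi (bse x).

Lemma porbit_iter n x : porbit phi (iter n phi x) = porbit phi x.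
Proof. by rewrite -permX porbit_perm. Qed.

Lemma porbit_eq x y : y \in porbit phi x -> porbit phi y = porbit phi x.
Proof. by rewrite -eq_porbit_mem => /eqP. Qed.

Lemma bse_eq x y : porbit phi y = porbit phi x -> bse y = bse x.
Proof.
rewrite /bse => ->; case: pickP => [//|/(_ x)]; by rewrite porbit_id.
Qed.

Lemma bse_in x : bse x \in porbit phi x.
Proof. rewrite /bse; case: pickP => [//|/(_ x)]; by rewrite porbit_id. Qed.

Lemma porbit_bse x : porbit phi (bse x) = porbit phi x.
Proof. exact: porbit_eq (bse_in x). Qed.

Lemma bse_bse x : bse (bse x) = bse x.
Proof. exact: bse_eq (porbit_bse x). Qed.

Lemma bse_iter n x : bse (iter n phi x) = bse x.
Proof. exact: bse_eq (porbit_iter n x). Qed.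

Lemma Lo_bse x : Lo (bse x) = Lo x.
Proof. by rewrite /Lo porbit_bse. Qed.

Lemma Lo_iter n x : Lo (iter n phi x) = Lo x.
Proof. by rewrite /Lo porbit_iter. Qed.

Lemma mem_traj x : x \in traject phi (bse x) (Lo x).
Proof.
by rewrite -Lo_bse /Lo -porbit_traject porbit_bse porbit_id.
Qed.

Lemma pos_lt x : pos x < Lo x.
Proof. by rewrite /pos -{2}(size_traject phi (bse x) (Lo x)) index_mem mem_traj. Qed.

Lemma iter_pos x : iter (pos x) phi (bse x) = x.
Proof. by rewrite -(nth_traject _ (pos_lt x)) nth_index ?mem_traj. Qed.

Lemma pos_iter_bse i x : i < Lo x -> pos (iter i phi (bse x)) = i.
Proof.
move=> iL; rewrite /pos bse_iter bse_bse Lo_iter Lo_bse -(nth_traject _ iL).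
rewrite index_uniq ?size_traject //.
by have := uniq_traject_porbit phi (bse x); rewrite -/(Lo (bse x)) Lo_bse.
Qed.

Lemma iter_Lo_mul m x : iter (m * Lo x) phi x = x.
Proof.
elim: m => [//|m IH]; rewrite mulSn iterD.
by rewrite IH /Lo iter_porbit.
Qed.

Lemma iter_mod n x : iter n phi x = iter (n %% Lo x) phi x.
Proof. by rewrite {1}(divn_eq n (Lo x)) addnC iterD iter_Lo_mul. Qed.

Lemma pos_iter i z : pos (iter i phi z) = (pos z + i) %% Lo z.
Proof.
rewrite -{1}(iter_pos z) -iterD (iter_mod _ (bse z)) Lo_bse addnC.
by rewrite pos_iter_bse // ltn_mod; have := pos_lt z; case: (Lo z).
Qed.

Lemma start_bse j x : bse (start j x) = bse x.
Proof. by rewrite /start bse_iter bse_bse. Qed.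

Lemma pos_start j x : pos (start j x) = pos x %/ 2 ^ j * 2 ^ j.
Proof.
rewrite /start pos_iter_bse //; apply: leq_ltn_trans (pos_lt x).
exact: leq_divM.
Qed.

Lemma start_eqP j x y :
  start j x = start j y <-> bse x = bse y /\ pos x %/ 2 ^ j = pos y %/ 2 ^ j.
Proof.
split => [E|[E1 E2]]; last by rewrite /start E1 E2.
split; first by rewrite -(start_bse j x) E start_bse.
have := congr1 pos E; rewrite !pos_start => /eqP.
by rewrite eqn_pmul2r ?expn_gt0 // => /eqP.
Qed.

Lemma start_S j x y : start j x = start j y -> start j.+1 x = start j.+1 y.
Proof.
move/start_eqP => [E1 E2]; apply/start_eqP; split => //.
by rewrite expnSr divnMA E2 -divnMA.
Qed.

Lemma start0_inj x y : start 0 x = start 0 y -> x = y.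
Proof.
move/start_eqP => [E1]; rewrite !divn1 => E2.
by rewrite -(iter_pos x) -(iter_pos y) E1 E2.
Qed.



Lemma fib_start0 : fib (start 0) = @singletons T.
Proof.
have cl x : [set y | start 0 y == start 0 x] = [set x].
  apply/setP => y; rewrite !inE; apply/eqP/eqP => [E|->//]; exact: start0_inj E.
by apply/setP => Z; apply/imsetP/imsetP => -[x _ ->]; exists x; rewrite ?cl.
Qed.

Lemma start_big x : start #|T| x = bse x.
Proof.
rewrite /start divn_small ?mul0n //.
apply: leq_trans (pos_lt x) _; apply: leq_trans (max_card _) _.
exact/ltnW/ltn_expl.
Qed.

Lemma class_bse x : [set y | bse y == bse x] = porbit phi x.
Proof.
apply/setP => y; rewrite inE; apply/eqP/idP => [E|yx].
  by rewrite -porbit_bse -E porbit_bse porbit_id.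
by apply: bse_eq; apply: porbit_eq.
Qed.

Lemma fib_start_big : fib (start #|T|) = porbits phi.
Proof.
apply/setP => Z; apply/imsetP/imsetP => -[x _ ->]; exists x => //.
  by rewrite -class_bse; apply/setP => y; rewrite !inE !start_big.
by rewrite -class_bse; apply/setP => y; rewrite !inE !start_big.
Qed.

Lemma stages j : exists s, [/\ path (@merge_step T) (@singletons T) s,
   last (@singletons T) s = fib (start j) &
   forall R, R \in s -> exists k, [/\ PP R, sat (start k) R & cst (start k.+1) R]].
Proof.
elim: j => [|j [s [ps ls Rs]]].
  by exists [::]; split => //=; rewrite fib_start0.
have [s' [ps' ls' Rs']] := @merge_to_fib _ (start j) (start j.+1) (fib (start j))
  (PP_fib _) (sat_fib (fun x y (e : start j x = start j y) => e))
  (cst_fibS (@start_S j)).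
exists (s ++ s'); split.
- by rewrite cat_path ps ls.
- by rewrite last_cat ls.
move=> R; rewrite mem_cat => /orP[/Rs //|/Rs' [? ? ?]]; by exists j.
Qed.
End Orbits.
Set Implicit Arguments. Unset Strict Implicit. Unset Printing Implicit Defensive.

Definition list4 p L d :=
  if p + d <= L then [:: p %/ d; (p %/ d).+1; (p %/ d).+2; 0]
  else [:: p %/ d; (p %/ d).+1; 0; 1].

Lemma size_list4 p L d : size (list4 p L d) = 4.
Proof. by rewrite /list4; case: ifP. Qed.

Lemma arith4 p L d i : 0 < d -> p < L -> i < 2 * d ->
  ((p + i) %% L) %/ d \in list4 p L d.
Proof.
move=> d0 pL id.
have up2 m : m < p + 2 * d -> m %/ d <= (p %/ d).+2.
  move=> hm; have : m %/ d <= (2 * d + p) %/ d by apply: leq_div2r; lia.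
  by rewrite divnMDl // add2n.
have up1 m : m < p + d -> m %/ d <= (p %/ d).+1.
  move=> hm; have : m %/ d <= (1 * d + p) %/ d by apply: leq_div2r; lia.
  by rewrite divnMDl // add1n.
have lo m : p <= m -> p %/ d <= m %/ d by move=> hm; apply: leq_div2r.
rewrite /list4; case: (ltnP (p + i) L) => h.
  rewrite modn_small //; have l1 := lo (p + i) (leq_addr _ _).
  case: ifP => hd.
    have u : (p + i) %/ d <= (p %/ d).+2 by apply: up2; lia.
    move: l1 u; move: ((p + i) %/ d) (p %/ d) => v q; rewrite !inE; lia.
  have u : (p + i) %/ d <= (p %/ d).+1 by apply: up1; lia.
  move: l1 u; move: ((p + i) %/ d) (p %/ d) => v q; rewrite !inE; lia.
have E : (p + i) %% L = (p + i - L) %% L by rewrite -{1}(subnK h) modnDr.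
rewrite E; case: ifP => hd.
  rewrite modn_small; last by lia.
  rewrite divn_small; last by lia.
  by rewrite !inE eqxx !orbT.
have hm : (p + i - L) %% L < 2 * d by apply: leq_ltn_trans (leq_mod _ _) _; lia.
have : (p + i - L) %% L %/ d < 2 by rewrite ltn_divLR // mulnC.
move: ((p + i - L) %% L %/ d) (p %/ d) => v q; rewrite !inE; lia.
Qed.

Lemma card_bigcup_le (I U : finType) (A : {pred I}) (F : I -> {set U}) :
  #|\bigcup_(i in A) F i| <= \sum_(i in A) #|F i|.
Proof.
apply: (big_ind2 (fun (B : {set U}) n => #|B| <= n)).
- by rewrite cards0.
- move=> B1 n1 B2 n2 h1 h2; rewrite cardsU.
  apply: leq_trans (leq_subr _ _) _; exact: leq_add.
- by [].
Qed.

Section Core.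
Variables (T : finType) (G : trigraph T) (phi : {perm T}).
Hypothesis aut : is_aut G phi.

Lemma iter_aut i x y : tedge G (iter i phi x) (iter i phi y) = tedge G x y.
Proof. by elim: i => [//|i IH]; rewrite !iterS aut. Qed.

Lemma iter_inv i v : iter i phi (iter i (phi^-1)%g v) = v.
Proof. by elim: i => [//|i IH]; rewrite iterSr iterS permKV. Qed.

Definition ppart (S : {set {set T}}) w := odflt set0 [pick Z in S | w \in Z].

Lemma ppart_eq S Z w : PP S -> Z \in S -> w \in Z -> ppart S w = Z.
Proof.
case=> _ _ Suniq ZS wZ; rewrite /ppart; case: pickP => [Z' /andP[Z'S wZ']|/(_ Z)].
  exact: Suniq wZ' wZ.
by rewrite ZS wZ.
Qed.

Lemma red_bound j S : PP S -> sat (start phi j) S -> cst (start phi j.+1) S ->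
  forall X : part S, red_degree (quot G S) X <= 4 * Delta G.
Proof.
move=> PS sf cg X; have PS' := PS; case: PS' => S0 Scov Suniq.
set X0 := val X; have X0S : X0 \in S := valP X.
have : X0 != set0 by apply: contraNneq S0 => <-.
case/set0Pn => x0 x0X.
set d := 2 ^ j; have d0 : 0 < d by rewrite expn_gt0.
pose u0 := [arg min_(u < x0 in X0) pos phi u].
have [u0X minu0] : u0 \in X0 /\ forall u, u \in X0 -> pos phi u0 <= pos phi u.
  by rewrite /u0; case: arg_minnP.
have near u : u \in X0 -> exists2 i, i < 2 * d & u = iter i phi u0.
  move=> uX; have := cg _ _ _ X0S uX u0X; move/start_eqP => [E1 E2].
  exists (pos phi u - pos phi u0).
    have h1 := ltn_ceil (pos phi u) (expn_gt0 2 j.+1).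
    have h2 := leq_divM (pos phi u0) (2 ^ j.+1).
    rewrite E2 mulSn in h1; rewrite expnS -/d in h1 h2.
    move: h1 h2; move: (pos phi u0 %/ (2 * d) * (2 * d)) => M; lia.
  transitivity (iter (pos phi u - pos phi u0 + pos phi u0) phi (bse phi u0)).
    by rewrite subnK ?minu0 // -E1 iter_pos.
  by rewrite iterD iter_pos.
pose N := [set z | tedge G u0 z].
pose K z := [set y in map (fun a => iter (a * d) phi (bse phi z)) (list4 (pos phi z) (Lo phi z) d)].
pose h k := if [pick w | start phi j w == k] is Some w then ppart S w else set0.
have hstart v : h (start phi j v) = ppart S v.
  rewrite /h; case: pickP => [w /eqP ew|/(_ v)]; last by rewrite eqxx.
  have [Z ZS vZ] := Scov v.
  by rewrite (ppart_eq PS ZS vZ) (ppart_eq PS ZS) // (sf Z v w ZS vZ).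
have Kz z i : i < 2 * d -> start phi j (iter i phi z) \in K z.
  move=> id; rewrite inE; apply/mapP.
  exists ((pos phi z + i) %% Lo phi z %/ d); first exact: arith4 (pos_lt phi z) id.
  by rewrite /start pos_iter bse_iter.
have sub : [set val Y | Y in [set Y | tred (quot G S) X Y]] \subset
           h @: (\bigcup_(z in N) K z).
  apply/subsetP => y /imsetP[Y]; rewrite inE /= /qred => /and3P[_ _].
  case/forall_inPn => u uX /forall_inPn[v vY /negPn euv] ->.
  have [i id ui] := near u uX.
  apply/imsetP; exists (start phi j v).
    apply/bigcupP; exists (iter i (phi^-1)%g v).
      by rewrite inE -(iter_aut i) iter_inv -ui.
    by rewrite -{1}(iter_inv i v); apply: Kz.
  by rewrite hstart (ppart_eq PS (valP Y) vY).
rewrite /red_degree -(card_imset _ val_inj).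
apply: leq_trans (subset_leq_card sub) _.
apply: leq_trans (leq_imset_card _ _) _.
apply: leq_trans (card_bigcup_le _ _) _.
have K4 z : #|K z| <= 4.
  by rewrite cardsE; apply: leq_trans (card_size _) _; rewrite size_map size_list4.
apply: (@leq_trans (\sum_(z in N) 4)); first by apply: leq_sum => z _; apply: K4.
rewrite sum_nat_const mulnC leq_mul2l; apply/orP; right.
apply: leq_trans _ (@leq_bigmax _ (degree G) u0); exact: leqnn.
Qed.
End Core.

Lemma max_seq_le (U : eqType) (l : seq U) (F : U -> nat) k :
  (forall P, P \in l -> F P <= k) -> \max_(P <- l) F P <= k.
Proof.
elim: l => [|a l IH] H; rewrite ?big_nil ?big_cons // geq_max H ?mem_head //.
by apply: IH => P Pl; apply: H; rewrite inE Pl orbT.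
Qed.

Lemma imsetD1_inj (aT rT : finType) (f : aT -> rT) (S : {set aT}) a :
  injective f -> f @: (S :\ a) = f @: S :\ f a.
Proof.
move=> injf; apply/setP => z; rewrite !inE; apply/imsetP/andP.
  case=> x; rewrite !inE => /andP[xa xS] ->; split; last exact: imset_f.
  by rewrite (inj_eq injf).
case=> nz /imsetP[x xS ez]; exists x => //; rewrite !inE xS andbT.
by apply: contraNneq nz => xa; rewrite ez xa.
Qed.

Section Lift.
Variables (T : finType) (G : trigraph T) (O : {set {set T}}).
Hypothesis PO : PP O.

Definition liftset (A : {set part O}) : {set T} := \bigcup_(U in A) val U.
Definition lift (P : {set {set part O}}) : {set {set T}} := liftset @: P.

Lemma in_liftset (A : {set part O}) (x : T) : reflect (exists2 U, U \in A & x \in val U) (x \in liftset A).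
Proof. exact: bigcupP. Qed.

Lemma liftset_sub (A B : {set part O}) : liftset A \subset liftset B -> A \subset B.
Proof.
case: PO => S0 _ Ouniq => sAB; apply/subsetP => U UA.
have : val U != set0 by apply: contraNneq S0 => <-; exact: valP.
case/set0Pn => x xU.
have /(subsetP sAB) /in_liftset[V VB xV] : x \in liftset A by apply/in_liftset; exists U.
have -> // : U = V by apply: val_inj; apply: (Ouniq _ _ x) => //; apply: valP.
Qed.

Lemma liftset_inj : injective liftset.
Proof.
move=> A B E; apply/eqP; rewrite eqEsubset.
by rewrite !liftset_sub // E subxx.
Qed.

Lemma lift_singletons : lift (@singletons (part O)) = O.
Proof.
rewrite /lift /singletons -imset_comp.
rewrite (@eq_imset _ _ _ val); last by move=> U; rewrite /= /liftset big_set1.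
apply/setP => Z; apply/imsetP/idP => [[U _ ->]|ZO]; first exact: valP.
by exists (exist _ Z ZO).
Qed.

Lemma lift_merge P R : merge_step P R -> merge_step (lift P) (lift R).
Proof.
case/merge_stepP => A [B [AP BP nAB ->]].
have -> : lift (mergeS P A B) = mergeS (lift P) (liftset A) (liftset B).
  rewrite /lift /mergeS imsetU1 !imsetD1_inj; try exact: liftset_inj.
  by rewrite /liftset bigcup_setU.
apply: merge_stepE; rewrite ?imset_f //.
by rewrite (inj_eq liftset_inj).
Qed.

Lemma lift_path P s : path (@merge_step _) P s ->
  path (@merge_step _) (lift P) (map lift s).
Proof.
elim: s P => [//|R s IH] P /= /andP[m ps].
by rewrite lift_merge // IH.
Qed.

Lemma lift_red (P : {set {set part O}}) : PP P -> forall X : part (lift P),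
  red_degree (quot G (lift P)) X <= max_red_degree (quot (quot G O) P).
Proof.
move=> PP' X; have PP2 := PP'; case: PP2 => _ _ Puniq.
have := valP X; case/imsetP => A AP eXA.
pose A' : part P := exist _ A AP.
pose Fl (B : part P) : part (lift P) := exist _ (liftset (val B)) (imset_f liftset (valP B)).
have sep B x y : B \in P -> A != B -> x \in liftset A -> y \in liftset B ->
    exists U V, [/\ U \in A, V \in B, x \in val U, y \in val V & val U != val V].
  move=> BP nAB /in_liftset[U UA xU] /in_liftset[V VB yV]; exists U, V; split => //.
  apply: contra nAB => /eqP /val_inj UV; apply/eqP; apply: (Puniq A B U) => //.
  by rewrite UV.
have sub : [set Y | tred (quot G (lift P)) X Y] \subset
           Fl @: [set B | tred (quot (quot G O) P) A' B].
  apply/subsetP => Y; rewrite inE /= /qred => /and3P[nXY nbl nna].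
  have := valP Y; case/imsetP => B BP eYB.
  apply/imsetP; exists (exist _ B BP); last by apply: val_inj; rewrite /= eYB.
  rewrite inE /= /qred /=.
  have nAB : A != B by apply: contra nXY => /eqP AB; rewrite eXA eYB AB.
  rewrite nAB /=; apply/andP; split.
  - move: nbl; rewrite eXA eYB => /forall_inPn[x xA /forall_inPn[y yB nb]].
    have [U [V [UA VB xU yV nUV]]] := sep B x y BP nAB xA yB.
    apply/forall_inPn; exists U => //; apply/forall_inPn; exists V => //.
    have nab : ~~ all_black G (val U) (val V).
      by apply/forall_inPn; exists x => //; apply/forall_inPn; exists y.
    rewrite /tblack /= /qedge /qred nUV nab /=.
    by case: (non_adj _ _ _).
  - move: nna; rewrite eXA eYB => /forall_inPn[x xA /forall_inPn[y yB /negPn e]].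
    have [U [V [UA VB xU yV nUV]]] := sep B x y BP nAB xA yB.
    apply/forall_inPn; exists U => //; apply/forall_inPn; exists V => //.
    rewrite negbK /= /qedge nUV /=.
    by apply/forall_inPn; exists x => //; apply/forall_inPn; exists y => //; rewrite negbK.
rewrite /red_degree; apply: leq_trans (subset_leq_card sub) _.
apply: leq_trans (leq_imset_card _ _) _.
apply: leq_trans _ (@leq_bigmax _ (red_degree (quot (quot G O) P)) A'); exact: leqnn.
Qed.

End Lift.

Theorem mainTheorem14 (T : finType) (G : trigraph T) (phi : {perm T}) :
  is_aut G phi ->
  (exists s : seq {set {set T}},
      [/\ partial_ctr_seq s, last_part s = porbits phi & width G s <= 4 * Delta G])
  /\ tww G <= maxn (4 * Delta G) (tww (quot G (porbits phi))).
Proof.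
move=> aut.
have [s [ps ls Rs]] := stages phi #|T|.
have ls' : last (@singletons T) s = porbits phi by rewrite ls fib_start_big.
have Pw : forall P, P \in (@singletons T) :: s -> max_red_degree (quot G P) <= 4 * Delta G.
  move=> P; rewrite inE => /orP[/eqP->|/Rs [k [PR sR cR]]].
    rewrite -(fib_start0 phi); apply/bigmax_leqP => X _.
    exact: (red_bound aut (PP_fib _) (sat_fib (fun x y (e : start phi 0 x = start phi 0 y) => e))
      (cst_fibS (@start_S _ phi 0))).
  by apply/bigmax_leqP => X _; exact: (red_bound aut PR sR cR X).
have ws : width G s <= 4 * Delta G by apply: max_seq_le.
split; first by exists s.
set O := porbits phi; set Q := quot G O.
have [s' [[ps' cs'] ws']] : exists s', complete_ctr_seq s' /\ width Q s' <= tww Q.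
  by rewrite /tww; case: ex_minnP => m /asboolP Hm _; exact: Hm.
have PO : PP O by rewrite /O -fib_start_big; exact: PP_fib.
have Hat : tww_at_most G (maxn (4 * Delta G) (tww Q)).
  exists (s ++ map (@lift T O) s'); split; first split.
  - rewrite /partial_ctr_seq cat_path ps ls' /=.
    by have := lift_path PO ps'; rewrite lift_singletons.
  - have E : last O (map (@lift T O) s') = lift (last (@singletons (part O)) s').
      by rewrite -(last_map (@lift T O)) lift_singletons.
    rewrite /last_part last_cat ls' E.
    by apply: leq_trans (leq_imset_card _ _) cs'.
  - apply: max_seq_le => P; rewrite -cat_cons mem_cat => /orP[Ps|].
      by apply: leq_trans (Pw P Ps) (leq_maxl _ _).
    case/mapP => P' P's' ->.
    have PP' : PP P' := path_PP (@PP_singletons _) ps' P's'.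
    apply: leq_trans (leq_maxr _ _); apply: leq_trans ws'.
    apply/bigmax_leqP => X _; apply: leq_trans (lift_red G PP' X) _.
    by apply: (@leq_bigmax_seq _ _ xpredT (fun P => max_red_degree (quot Q P))); rewrite // inE P's' orbT.
rewrite /tww; case: ex_minnP => m _ minm; apply: minm; exact/asboolP.
Qed.
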